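(* Let $S^2\subset\mathbb{R}^3$ be the unit sphere, let $S^2\times\mathbb{R}$ be the trivial line bundle with the standard inner product, and let $TS^2$ carry the metric induced from $\mathbb{R}^3$. Define sections $f_1\equiv 1$, $f_2\equiv f_3\equiv 0$ of $S^2\times\mathbb{R}$ (a moving Parseval frame for it). Although $(S^2\times\mathbb{R})\oplus TS^2\cong S^2\times\mathbb{R}^3$ admits a moving basis, there is no moving basis $(e_i)_{i=1}^3$ of continuous sections of $(S^2\times\mathbb{R})\oplus TS^2$ such that $P_{S^2\times\mathbb{R}}e_i=f_i$ for $i=1,2,3$, where $P_{S^2\times\mathbb{R}}$ is the fiberwise orthogonal projection onto the first summand.
   Context: A moving basis of a rank $k$ vector bundle is a sequence of $k$ sections that form a basis of each fiber. A sequence of vectors $(x_i)_{i=1}^k$ in a finite-dimensional real inner product space $H$ is a Parseval frame for $H$ if $\sum_{i=1}^k\langle x,x_i\rangle^2=\|x\|^2$ for all $x\in H$; a moving Parseval frame of a bundle is a sequence of sections forming a Parseval frame of each fiber. *)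

(* Defs.v *)
From Stdlib Require Import Reals.
Open Scope R_scope.

Record V3 := mkV3 { c1 : R; c2 : R; c3 : R }.

Definition dot (u v : V3) : R := c1 u * c1 v + c2 u * c2 v + c3 u * c3 v.
Definition vadd (u v : V3) : V3 := mkV3 (c1 u + c1 v) (c2 u + c2 v) (c3 u + c3 v).
Definition vscale (a : R) (u : V3) : V3 := mkV3 (a * c1 u) (a * c2 u) (a * c3 u).
Definition vsub (u v : V3) : V3 := vadd u (vscale (-1) v).
Definition vzero : V3 := mkV3 0 0 0.

Definition on_sphere (x : V3) : Prop := dot x x = 1.

Definition tangent (x v : V3) : Prop := dot x v = 0.

(* Elements of the total space fibres of (S^2 x R) (+) TS^2 : pairs (t, v),
   t in R (the trivial line), v in T_x S^2. *)
Definition FV := (R * V3)%type.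
Definition in_fiber (x : V3) (w : FV) : Prop := tangent x (snd w).
Definition fadd (w z : FV) : FV := (fst w + fst z, vadd (snd w) (snd z)).
Definition fscale (a : R) (w : FV) : FV := (a * fst w, vscale a (snd w)).
Definition fzero : FV := (0, vzero).
Definition comb3 (a b c : R) (w1 w2 w3 : FV) : FV :=
  fadd (fscale a w1) (fadd (fscale b w2) (fscale c w3)).

Definition dist3 (x y : V3) : R := sqrt (dot (vsub x y) (vsub x y)).
Definition distF (w z : FV) : R :=
  sqrt ((fst w - fst z) ^ 2 + dot (vsub (snd w) (snd z)) (vsub (snd w) (snd z))).

Definition continuous_on_S2 (s : V3 -> FV) : Prop :=
  forall x, on_sphere x -> forall eps, 0 < eps ->
    exists delta, 0 < delta /\
      forall y, on_sphere y -> dist3 x y < delta -> distF (s x) (s y) < eps.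

Definition cont_section (s : V3 -> FV) : Prop :=
  (forall x, on_sphere x -> in_fiber x (s x)) /\ continuous_on_S2 s.

Definition fiber_basis (x : V3) (w1 w2 w3 : FV) : Prop :=
  in_fiber x w1 /\ in_fiber x w2 /\ in_fiber x w3 /\
  (forall a b c, comb3 a b c w1 w2 w3 = fzero -> a = 0 /\ b = 0 /\ c = 0) /\
  (forall w, in_fiber x w -> exists a b c, w = comb3 a b c w1 w2 w3).

Definition moving_basis (e1 e2 e3 : V3 -> FV) : Prop :=
  cont_section e1 /\ cont_section e2 /\ cont_section e3 /\
  forall x, on_sphere x -> fiber_basis x (e1 x) (e2 x) (e3 x).

Definition parseval_R (a b c : R) : Prop :=
  forall t : R, (t * a) ^ 2 + (t * b) ^ 2 + (t * c) ^ 2 = t ^ 2.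

Definition f1 (_ : V3) : R := 1.
Definition f2 (_ : V3) : R := 0.
Definition f3 (_ : V3) : R := 0.

(* Main.v *)
Require Import Defs.
From Stdlib Require Import Reals Lra Lia Psatz Nsatz ClassicalEpsilon.
Import Defs.
Open Scope R_scope.

Definition C2 (f : R -> R -> R) (s t : R) := forall eps, 0 < eps -> exists del, 0 < del /\
  forall s' t', Rabs (s' - s) < del -> Rabs (t' - t) < del -> Rabs (f s' t' - f s t) < eps.

Lemma C2_ext f g s t : (forall a b, f a b = g a b) -> C2 f s t -> C2 g s t.
Proof. intros E H eps He. destruct (H eps He) as [d [Hd H1]]. exists d; split; auto.
  intros. rewrite <- !E. auto. Qed.

Lemma C2_const c s t : C2 (fun _ _ => c) s t.
Proof. intros eps He; exists 1; split; [lra|]. intros. rewrite Rminus_diag, Rabs_R0; lra. Qed.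

Lemma C2_s s t : C2 (fun a _ => a) s t.
Proof. intros eps He; exists eps; split; auto. Qed.
Lemma C2_t s t : C2 (fun _ b => b) s t.
Proof. intros eps He; exists eps; split; auto. Qed.

Lemma C2_plus f g s t : C2 f s t -> C2 g s t -> C2 (fun a b => f a b + g a b) s t.
Proof. intros Hf Hg eps He.
  destruct (Hf (eps/2)) as [d1 [Hd1 H1]]; [lra|]. destruct (Hg (eps/2)) as [d2 [Hd2 H2]]; [lra|].
  exists (Rmin d1 d2); split. apply Rmin_pos; auto.
  intros s' t' Hs Ht. pose proof (Rmin_l d1 d2). pose proof (Rmin_r d1 d2).
  specialize (H1 s' t' ltac:(lra) ltac:(lra)). specialize (H2 s' t' ltac:(lra) ltac:(lra)).
  replace (f s' t' + g s' t' - (f s t + g s t)) with ((f s' t' - f s t) + (g s' t' - g s t)) by ring.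
  eapply Rle_lt_trans. apply Rabs_triang. lra. Qed.

Lemma C2_comp f g s t : C2 f s t -> continuity_pt g (f s t) -> C2 (fun a b => g (f a b)) s t.
Proof. intros Hf Hg eps He.
  unfold continuity_pt, continue_in, limit1_in, limit_in in Hg. simpl in Hg. unfold R_dist, D_x, no_cond in Hg.
  destruct (Hg eps He) as [al [Hal H1]].
  destruct (Hf al Hal) as [d [Hd H2]]. exists d; split; auto.
  intros s' t' Hs Ht. specialize (H2 s' t' Hs Ht).
  destruct (Req_dec (f s t) (f s' t')) as [E|E].
  - rewrite E, Rminus_diag, Rabs_R0; lra.
  - apply H1. split; auto. Qed.

Lemma cont_sq y : continuity_pt (fun x => x * x) y.
Proof. apply (continuity_pt_mult (fun x => x) (fun x => x)); apply derivable_continuous_pt; apply derivable_pt_id. Qed.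

Lemma cont_lin k c y : continuity_pt (fun x => k * x + c) y.
Proof. apply derivable_continuous_pt. reg. Qed.

Lemma C2_mult f g s t : C2 f s t -> C2 g s t -> C2 (fun a b => f a b * g a b) s t.
Proof. intros Hf Hg.
  assert (A : C2 (fun a b => f a b + g a b) s t) by (apply C2_plus; auto).
  assert (B : C2 (fun a b => f a b + ((-1) * g a b + 0)) s t).
  { apply C2_plus; auto. apply (C2_comp g (fun x => -1 * x + 0)); auto. apply cont_lin. }
  assert (A2 := C2_comp _ _ s t A (cont_sq _)). assert (B2 := C2_comp _ _ s t B (cont_sq _)).
  assert (C := C2_plus _ _ s t A2 (C2_comp _ (fun x => -1 * x + 0) s t B2 (cont_lin _ _ _))).
  assert (D := C2_comp _ (fun x => /4 * x + 0) s t C (cont_lin _ _ _)).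
  eapply C2_ext; [|exact D]. intros; simpl. field. Qed.

Definition in01 (x : R) := 0 <= x <= 1.
Definition cl (x : R) := Rmax 0 (Rmin 1 x).
Lemma cl_in x : in01 (cl x).
Proof. unfold cl, in01, Rmax, Rmin. repeat destruct Rle_dec; lra. Qed.
Lemma cl_id x : in01 x -> cl x = x.
Proof. unfold cl, in01, Rmax, Rmin. repeat destruct Rle_dec; lra. Qed.
Lemma cl_lip x y : Rabs (cl x - cl y) <= Rabs (x - y).
Proof. unfold cl, Rmax, Rmin. repeat destruct Rle_dec; unfold Rabs; repeat destruct Rcase_abs; lra. Qed.

Section UCsec.
Variable H : R -> R -> R.
Hypothesis Hc : forall s t, in01 s -> in01 t -> C2 H s t.
Variable eps : R.
Hypothesis Heps : 0 < eps.

Definition good s t r := forall a b a' b', in01 a -> in01 b -> in01 a' -> in01 b' ->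
  Rabs (a - s) < r -> Rabs (b - t) < r -> Rabs (a' - s) < r -> Rabs (b' - t) < r ->
  Rabs (H a b - H a' b') < eps.

Lemma good_mono s t r r' : r' <= r -> good s t r -> good s t r'.
Proof. intros Hr G a b a' b' ? ? ? ? ? ? ? ?. apply G; auto; lra. Qed.

Definition E s t := fun r => 0 < r <= 1 /\ good (cl s) (cl t) r.

Lemma E_bound s t : bound (E s t).
Proof. exists 1. intros r [Hr _]. lra. Qed.

Lemma E_ne s t : exists r, E s t r.
Proof. destruct (Hc (cl s) (cl t) (cl_in s) (cl_in t) (eps/2)) as [d [Hd Hd']]; [lra|].
  exists (Rmin d 1). pose proof (Rmin_l d 1). pose proof (Rmin_r d 1).
  split. split; [apply Rmin_pos; lra| lra].
  intros a b a' b' _ _ _ _ ? ? ? ?.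
  assert (X1 := Hd' a b ltac:(lra) ltac:(lra)). assert (X2 := Hd' a' b' ltac:(lra) ltac:(lra)).
  replace (H a b - H a' b') with ((H a b - H (cl s) (cl t)) - (H a' b' - H (cl s) (cl t))) by ring.
  eapply Rle_lt_trans. apply Rabs_triang. rewrite Rabs_Ropp. lra. Qed.

Definition rho s t := proj1_sig (completeness (E s t) (E_bound s t) (E_ne s t)).

Lemma rho_lub s t : is_lub (E s t) (rho s t).
Proof. unfold rho. destruct completeness; simpl; auto. Qed.

Lemma rho_pos s t : 0 < rho s t.
Proof. destruct (E_ne s t) as [r Hr]. destruct (rho_lub s t) as [U _]. pose proof (U r Hr).
  destruct Hr as [[? ?] _]. lra. Qed.

Lemma rho_good s t r : 0 < r < rho s t -> good (cl s) (cl t) r.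
Proof. intros Hr. destruct (rho_lub s t) as [U L].
  destruct (Classical_Prop.classic (exists r', E s t r' /\ r < r')) as [[r' [[_ G] Hr']]|N].
  - eapply good_mono; [|exact G]. lra.
  - exfalso. assert (is_upper_bound (E s t) r).
    { intros x Ex. destruct (Rle_dec x r); auto. exfalso. apply N. exists x. split; auto; lra. }
    specialize (L r H0). lra. Qed.

Lemma rho_lip s t s' t' : rho s t <= rho s' t' + (Rabs (s - s') + Rabs (t - t')).
Proof. destruct (rho_lub s t) as [_ L]. apply L.
  set (d := Rabs (s - s') + Rabs (t - t')). assert (Hdd : d = Rabs (s - s') + Rabs (t - t')) by reflexivity.
  pose proof (cl_lip s s'). pose proof (cl_lip t t').
  pose proof (Rabs_pos (s - s')). pose proof (Rabs_pos (t - t')). assert (0 <= d) by (unfold d; lra). clearbody d.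
  unfold is_upper_bound; intros r [[Hr0 Hr1] G].
  destruct (Rle_dec r d). { pose proof (rho_pos s' t'). lra. }
  destruct (rho_lub s' t') as [U' _]. cut (r - d <= rho s' t'). lra.
  apply U'. unfold E. split. split; [lra|lra].
  intros a b a' b' ? ? ? ? X1 X2 X3 X4. apply G; auto.
  - replace (a - cl s) with ((a - cl s') + (cl s' - cl s)) by ring. eapply Rle_lt_trans. apply Rabs_triang.
    rewrite (Rabs_minus_sym (cl s') (cl s)). lra.
  - replace (b - cl t) with ((b - cl t') + (cl t' - cl t)) by ring. eapply Rle_lt_trans. apply Rabs_triang.
    rewrite (Rabs_minus_sym (cl t') (cl t)). lra.
  - replace (a' - cl s) with ((a' - cl s') + (cl s' - cl s)) by ring. eapply Rle_lt_trans. apply Rabs_triang.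
    rewrite (Rabs_minus_sym (cl s') (cl s)). lra.
  - replace (b' - cl t) with ((b' - cl t') + (cl t' - cl t)) by ring. eapply Rle_lt_trans. apply Rabs_triang.
    rewrite (Rabs_minus_sym (cl t') (cl t)). lra.
Qed.

Lemma lip_cont (f : R -> R) x : (forall y z, f y <= f z + Rabs (y - z)) -> continuity_pt f x.
Proof. intros L. unfold continuity_pt, continue_in, limit1_in, limit_in. simpl. unfold R_dist.
  intros e He. exists e. split; auto. intros y [_ Hy].
  pose proof (L y x). pose proof (L x y). rewrite <- Rabs_Ropp in H1. replace (- (x - y)) with (y - x) in H1 by ring.
  unfold Rabs in *. repeat destruct Rcase_abs; lra. Qed.

Lemma tmin s : { t | in01 t /\ forall t', in01 t' -> rho s t <= rho s t' }.
Proof. apply constructive_indefinite_description.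
  destruct (continuity_ab_min (rho s) 0 1) as [m [Hm Hm']]. lra.
  - intros c _. apply lip_cont. intros y z. pose proof (rho_lip s y s z). rewrite Rminus_diag, Rabs_R0 in H0. lra.
  - exists m. split; auto. Qed.

Definition phi s := rho s (proj1_sig (tmin s)).

Lemma phi_lip s s' : phi s <= phi s' + Rabs (s - s').
Proof. unfold phi. destruct (tmin s) as [t [Ht Hm]]. destruct (tmin s') as [t' [Ht' Hm']]. simpl.
  pose proof (Hm t' Ht'). pose proof (rho_lip s t' s' t'). rewrite Rminus_diag, Rabs_R0 in H1. lra. Qed.

Lemma UC : exists del, 0 < del /\ forall s t s' t', in01 s -> in01 t -> in01 s' -> in01 t' ->
  Rabs (s - s') < del -> Rabs (t - t') < del -> Rabs (H s t - H s' t') < eps.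
Proof.
  destruct (continuity_ab_min phi 0 1) as [m [Hm Hm']]. lra.
  { intros c _. apply lip_cont. apply phi_lip. }
  exists (phi m / 2). assert (P : 0 < phi m) by apply rho_pos. split. lra.
  intros s t s' t' Hs Ht Hs' Ht' X1 X2.
  assert (Q : phi m <= rho s t).
  { pose proof (Hm s Hs) as Hq. unfold phi at 2 in Hq. destruct (tmin s) as [t0 [Ht00 Ht0]]; simpl in Hq.
    pose proof (Ht0 t Ht). lra. }
  pose proof (rho_good s t (phi m / 2) ltac:(lra)) as G.
  rewrite (cl_id s Hs), (cl_id t Ht) in G.
  apply G; auto; try (rewrite Rminus_diag, Rabs_R0; lra).
  rewrite <- Rabs_Ropp; replace (- (s' - s)) with (s - s') by ring; auto.
  rewrite <- Rabs_Ropp; replace (- (t' - t)) with (t - t') by ring; auto.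
Qed.
End UCsec.

Definition arg0 (z : R * R) := atan (snd z / fst z).
Definition cmul (z w : R * R) : R * R := (fst z * fst w - snd z * snd w, fst z * snd w + snd z * fst w).
Definition cconj (z : R * R) : R * R := (fst z, - snd z).
Definition ang (a b : R * R) := arg0 (cmul (cconj a) b).
Definition close (z : R * R) := Rabs (snd z) < fst z.

Lemma atan_small x : Rabs x < 1 -> - (PI/4) < atan x < PI/4.
Proof. intros Hx. apply Rabs_def2 in Hx. destruct Hx as [H1 H2].
  pose proof (atan_increasing _ _ H1). pose proof (atan_increasing _ _ H2).
  rewrite atan_opp, atan_1 in *. lra. Qed.

Lemma close_ratio z : close z -> 0 < fst z /\ Rabs (snd z / fst z) < 1.
Proof. unfold close; intros H. assert (0 < fst z) by (pose proof (Rabs_pos (snd z)); lra).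
  split; auto. unfold Rdiv. rewrite Rabs_mult, Rabs_inv, (Rabs_right (fst z)) by lra.
  apply (Rmult_lt_reg_r (fst z)); auto. field_simplify; lra. Qed.

Lemma arg0_mul z w : close z -> close w -> arg0 (cmul z w) = arg0 z + arg0 w.
Proof. intros Hz Hw. destruct (close_ratio z Hz) as [Pz Rz]. destruct (close_ratio w Hw) as [Pw Rw].
  destruct z as [x1 y1], w as [x2 y2]. unfold arg0, cmul in *; simpl in *.
  pose proof (atan_small _ Rz) as A. pose proof (atan_small _ Rw) as B.
  set (a := atan (y1/x1)) in *. set (b := atan (y2/x2)) in *.
  assert (Ta : tan a = y1 / x1) by apply tan_atan. assert (Tb : tan b = y2 / x2) by apply tan_atan.
  pose proof PI_RGT_0.
  assert (ca : cos a <> 0) by (apply Rgt_not_eq, cos_gt_0; lra).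
  assert (cb : cos b <> 0) by (apply Rgt_not_eq, cos_gt_0; lra).
  assert (cab : cos (a + b) <> 0) by (apply Rgt_not_eq, cos_gt_0; lra).
  apply Rabs_def2 in Rz. apply Rabs_def2 in Rw.
  assert (Hp : -1 < y1/x1 * (y2/x2) < 1).
  { split; [|]; nra. }
  assert (Hne : 1 - tan a * tan b <> 0) by (rewrite Ta, Tb; lra).
  pose proof (tan_plus a b ca cb cab Hne) as T. rewrite Ta, Tb in T.
  rewrite <- (atan_tan (a + b)) by lra. rewrite T. f_equal.
  assert (0 < x1 * x2 - y1 * y2).
  { unfold close in Hz, Hw; simpl in Hz, Hw. apply Rabs_def2 in Hz. apply Rabs_def2 in Hw. nra. }
  field. lra.
Qed.

Lemma arg0_scale k z : 0 < k -> fst z <> 0 -> arg0 (k * fst z, k * snd z) = arg0 z.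
Proof. intros Hk Hz. unfold arg0; simpl. f_equal. field. lra. Qed.

Lemma arg0_conj z : arg0 (cconj z) = - arg0 z.
Proof. unfold arg0, cconj; simpl. rewrite <- atan_opp. f_equal. unfold Rdiv. ring. Qed.

Lemma close_conj z : close z -> close (cconj z).
Proof. unfold close, cconj; simpl. rewrite Rabs_Ropp. auto. Qed.

Lemma close_mul_pos z w : close z -> close w -> 0 < fst (cmul z w).
Proof. unfold close, cmul; simpl. intros Hz Hw. apply Rabs_def2 in Hz. apply Rabs_def2 in Hw. nra. Qed.

Lemma ang_add a b d : close (cmul (cconj a) b) -> close (cmul (cconj b) d) ->
  ang a b + ang b d = ang a d.
Proof. intros H1 H2. unfold ang. rewrite <- arg0_mul by auto.
  pose proof (close_mul_pos _ _ H1 H2) as P.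
  assert (Hb : 0 < fst b * fst b + snd b * snd b).
  { destruct (Rle_lt_dec (fst b * fst b + snd b * snd b) 0) as [L|L]; auto.
    exfalso. assert (fst b = 0) by nra. assert (snd b = 0) by nra.
    unfold close, cmul, cconj in H1; simpl in H1. rewrite H, H0 in H1. apply Rabs_def2 in H1. lra. }
  assert (E : cmul (cmul (cconj a) b) (cmul (cconj b) d) =
    ((fst b * fst b + snd b * snd b) * fst (cmul (cconj a) d), (fst b * fst b + snd b * snd b) * snd (cmul (cconj a) d))).
  { unfold cmul, cconj; simpl. f_equal; ring. }
  rewrite E. apply arg0_scale; auto.
  intro Z. rewrite E in P; cbn [fst] in P. rewrite Z, Rmult_0_r in P. lra. Qed.

Lemma ang_same a : ang a a = 0.
Proof. unfold ang, arg0, cmul, cconj; simpl. replace (fst a * snd a + - snd a * fst a) with 0 by ring.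
  unfold Rdiv. rewrite Rmult_0_l. apply atan_0. Qed.

Lemma unit_close a b : fst a * fst a + snd a * snd a = 1 -> fst b * fst b + snd b * snd b = 1 ->
  (fst a - fst b) * (fst a - fst b) + (snd a - snd b) * (snd a - snd b) < 1/4 ->
  close (cmul (cconj a) b).
Proof. destruct a as [a1 a2], b as [b1 b2]. unfold close, cmul, cconj; simpl. intros Ha Hb Hd.
  set (D := a1 * b1 - - a2 * b2). set (X := a1 * b2 + - a2 * b1).
  assert (D > 7/8) by (unfold D; nra).
  assert (X * X + D * D = 1) by (unfold X, D; nra).
  apply Rabs_def1; nra. Qed.

Lemma strong_close_sq z : 3 * Rabs (snd z) < fst z -> close (cmul z z).
Proof. destruct z as [x y]; unfold close, cmul; simpl. intros H.
  destruct (Rcase_abs y); [rewrite Rabs_left in H by lra | rewrite Rabs_right in H by lra];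
  apply Rabs_def1; nra. Qed.

Definition refl (p v : R * R) : R * R :=
  (- fst (cmul (cmul p p) (cconj v)), - snd (cmul (cmul p p) (cconj v))).

Lemma ang_refl p q a b : 3 * Rabs (snd (cmul (cconj p) q)) < fst (cmul (cconj p) q) ->
  close (cmul (cconj a) b) -> ang (refl p a) (refl q b) = 2 * ang p q - ang a b.
Proof. intros Hs Hc. set (z := cmul (cconj p) q) in *. set (c := cmul (cconj a) b) in *.
  assert (Hz : close z). { unfold close. pose proof (Rabs_pos (snd z)). lra. }
  unfold ang. fold z c.
  assert (E : cmul (cconj (refl p a)) (refl q b) = cmul (cmul z z) (cconj c)).
  { unfold z, c, refl, cmul, cconj; simpl. f_equal; ring. }
  rewrite E, arg0_mul, arg0_mul, arg0_conj by (auto using strong_close_sq, close_conj). ring. Qed.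

Fixpoint sumN (f : nat -> R) (n : nat) : R :=
  match n with O => 0 | S m => sumN f m + f m end.

Lemma sumN_ext f g n : (forall j, (j < n)%nat -> f j = g j) -> sumN f n = sumN g n.
Proof. induction n; simpl; intros; auto. rewrite IHn by (intros; apply H; lia). rewrite H by lia. auto. Qed.

Lemma sumN_plus f g n : sumN (fun j => f j + g j) n = sumN f n + sumN g n.
Proof. induction n; simpl; [ring|]. rewrite IHn. ring. Qed.

Lemma sumN_const c n : sumN (fun _ => c) n = INR n * c.
Proof. induction n; simpl sumN; [simpl; ring|]. rewrite IHn, S_INR. ring. Qed.

Lemma sumN_scal k f n : sumN (fun j => k * f j) n = k * sumN f n.
Proof. induction n; simpl; [ring|]. rewrite IHn. ring. Qed.

Section Stokes.
Variable G : nat -> nat -> R * R.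
Variable N : nat.
Definition hsum i := sumN (fun j => ang (G i j) (G i (S j))) N.

Lemma stokes_step i :
  (forall j, (j < N)%nat -> close (cmul (cconj (G i j)) (G i (S j))) /\ close (cmul (cconj (G (S i) j)) (G (S i) (S j)))) ->
  (forall j, (j <= N)%nat -> close (cmul (cconj (G i j)) (G (S i) j))) ->
  G i N = G i 0%nat -> G (S i) N = G (S i) 0%nat -> hsum i = hsum (S i).
Proof. intros Hh Hv P1 P2.
  assert (Inv : forall n, (n <= N)%nat -> sumN (fun j => ang (G i j) (G i (S j))) n + ang (G i n) (G (S i) n)
     = ang (G i 0%nat) (G (S i) 0%nat) + sumN (fun j => ang (G (S i) j) (G (S i) (S j))) n).
  { induction n; intros Hn; simpl sumN. ring.
    specialize (IHn ltac:(lia)). destruct (Hh n ltac:(lia)) as [A B].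
    pose proof (ang_add _ _ _ A (Hv (S n) Hn)). pose proof (ang_add _ _ _ (Hv n ltac:(lia)) B). lra. }
  unfold hsum. pose proof (Inv N (le_n N)). rewrite P1, P2 in H. lra. Qed.
End Stokes.

Lemma C2_minus f g s t : C2 f s t -> C2 g s t -> C2 (fun a b => f a b - g a b) s t.
Proof. intros. apply (C2_plus f (fun a b => - g a b)); auto.
  apply (C2_comp g (fun x => - x)); auto. apply derivable_continuous_pt. reg. Qed.
Lemma C2_opp f s t : C2 f s t -> C2 (fun a b => - f a b) s t.
Proof. intros. apply (C2_comp f (fun x => - x)); auto. apply derivable_continuous_pt. reg. Qed.
Lemma C2_inv f s t : C2 f s t -> f s t <> 0 -> C2 (fun a b => / f a b) s t.
Proof. intros. apply (C2_comp f (fun x => / x)); auto.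
  apply (continuity_pt_inv (fun x => x)); auto. apply derivable_continuous_pt, derivable_pt_id. Qed.
Lemma C2_div f g s t : C2 f s t -> C2 g s t -> g s t <> 0 -> C2 (fun a b => f a b / g a b) s t.
Proof. intros. apply (C2_mult f (fun a b => / g a b)); auto. apply C2_inv; auto. Qed.
Lemma C2_sqrt f s t : C2 f s t -> 0 < f s t -> C2 (fun a b => sqrt (f a b)) s t.
Proof. intros. apply (C2_comp f sqrt); auto. apply continuity_pt_sqrt. lra. Qed.
Lemma C2_cos2pi s t : C2 (fun a b => cos (2 * PI * b)) s t.
Proof. apply (C2_comp (fun a b => b) (fun x => cos (2 * PI * x))). apply C2_t.
  apply derivable_continuous_pt. reg. Qed.
Lemma C2_sin2pi s t : C2 (fun a b => sin (2 * PI * b)) s t.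
Proof. apply (C2_comp (fun a b => b) (fun x => sin (2 * PI * x))). apply C2_t.
  apply derivable_continuous_pt. reg. Qed.

Ltac c2 := repeat first [ apply C2_const | apply C2_s | apply C2_t | apply C2_cos2pi | apply C2_sin2pi
  | apply C2_minus | apply C2_plus | apply C2_div | apply C2_mult | apply C2_opp ].

Definition Dn (p1 p2 : R) := 1 + p1 * p1 + p2 * p2.
Definition sig (e p1 p2 : R) : V3 :=
  mkV3 (2 * p1 / Dn p1 p2) (2 * p2 / Dn p1 p2) (e * (1 - p1 * p1 - p2 * p2) / Dn p1 p2).
Definition Px (s t : R) := s * cos (2 * PI * t).
Definition Py (s t : R) := s * sin (2 * PI * t).

Lemma Dn_pos p1 p2 : 0 < Dn p1 p2.
Proof. unfold Dn. nra. Qed.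

Lemma sig_sphere e p1 p2 : e * e = 1 -> on_sphere (sig e p1 p2).
Proof. intros He. pose proof (Dn_pos p1 p2). unfold on_sphere, dot, sig; simpl.
  transitivity ((4*p1*p1 + 4*p2*p2 + (e*e) * ((1 - p1*p1 - p2*p2)*(1 - p1*p1-p2*p2))) / (Dn p1 p2 * Dn p1 p2)).
  field; lra. rewrite He. unfold Dn in *. field. lra. Qed.

Lemma dist3_small x y d : 0 < d -> Rabs (c1 x - c1 y) < d/2 -> Rabs (c2 x - c2 y) < d/2 ->
  Rabs (c3 x - c3 y) < d/2 -> dist3 x y < d.
Proof. intros Hd H1 H2 H3. unfold dist3, dot, vsub, vadd, vscale; simpl.
  apply Rabs_def2 in H1; apply Rabs_def2 in H2; apply Rabs_def2 in H3.
  set (a1 := c1 x + -1 * c1 y). set (a2 := c2 x + -1 * c2 y). set (a3 := c3 x + -1 * c3 y).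
  assert (a1 * a1 < d * d / 4) by (unfold a1; nra). assert (a2 * a2 < d * d / 4) by (unfold a2; nra).
  assert (a3 * a3 < d * d / 4) by (unfold a3; nra).
  pose proof (Rle_0_sqr a1). pose proof (Rle_0_sqr a2). pose proof (Rle_0_sqr a3). unfold Rsqr in *.
  rewrite <- (sqrt_square d) by lra. apply sqrt_lt_1_alt. split; lra. Qed.

Lemma refl_alg p1 p2 w1 w2 w3 : p1*p1+p2*p2 = 1 -> p1*w1+p2*w2 = 0 ->
 (1 - p1 * p1 + p2 * p2) * w1 + (-2 * p1 * p2) * w2 + (-2 * -1 * p1) * w3 =
 - ((p1 * p1 - p2 * p2) * ((1 - p1 * p1 + p2 * p2) * w1 + (-2 * p1 * p2) * w2 + (-2 * 1 * p1) * w3)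
   + 2 * p1 * p2 * ((-2 * p1 * p2) * w1 + (1 + p1 * p1 - p2 * p2) * w2 + (-2 * 1 * p2) * w3)) /\
 (-2 * p1 * p2) * w1 + (1 + p1 * p1 - p2 * p2) * w2 + (-2 * -1 * p2) * w3 =
 (p1 * p1 - p2 * p2) * ((-2 * p1 * p2) * w1 + (1 + p1 * p1 - p2 * p2) * w2 + (-2 * 1 * p2) * w3)
  - 2 * p1 * p2 * ((1 - p1 * p1 + p2 * p2) * w1 + (-2 * p1 * p2) * w2 + (-2 * 1 * p1) * w3).
Proof. intros. split; nsatz. Qed.

Lemma refl_norm p1 p2 v1 v2 : p1*p1+p2*p2 = 1 ->
  (- ((p1 * p1 - p2 * p2) * v1 + 2 * p1 * p2 * v2)) * (- ((p1 * p1 - p2 * p2) * v1 + 2 * p1 * p2 * v2)) +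
  ((p1 * p1 - p2 * p2) * v2 - 2 * p1 * p2 * v1) * ((p1 * p1 - p2 * p2) * v2 - 2 * p1 * p2 * v1) = v1 * v1 + v2 * v2.
Proof. intros. nsatz. Qed.

Section Hairy.
Variable u : V3 -> V3.
Hypothesis Htan : forall x, on_sphere x -> dot x (u x) = 0.
Hypothesis Hnz : forall x, on_sphere x -> u x <> vzero.
Hypothesis Hcont : forall x, on_sphere x -> forall eps, 0 < eps -> exists del, 0 < del /\
  forall y, on_sphere y -> dist3 x y < del ->
  Rabs (c1 (u y) - c1 (u x)) < eps /\ Rabs (c2 (u y) - c2 (u x)) < eps /\ Rabs (c3 (u y) - c3 (u x)) < eps.

Lemma C2_ucomp X1 X2 X3 s t : C2 X1 s t -> C2 X2 s t -> C2 X3 s t ->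
  (forall a b, on_sphere (mkV3 (X1 a b) (X2 a b) (X3 a b))) ->
  C2 (fun a b => c1 (u (mkV3 (X1 a b) (X2 a b) (X3 a b)))) s t /\
  C2 (fun a b => c2 (u (mkV3 (X1 a b) (X2 a b) (X3 a b)))) s t /\
  C2 (fun a b => c3 (u (mkV3 (X1 a b) (X2 a b) (X3 a b)))) s t.
Proof. intros H1 H2 H3 Hs.
  assert (K : forall eps, 0 < eps -> exists del, 0 < del /\ forall a b, Rabs (a - s) < del -> Rabs (b - t) < del ->
    Rabs (c1 (u (mkV3 (X1 a b) (X2 a b) (X3 a b))) - c1 (u (mkV3 (X1 s t) (X2 s t) (X3 s t)))) < eps /\
    Rabs (c2 (u (mkV3 (X1 a b) (X2 a b) (X3 a b))) - c2 (u (mkV3 (X1 s t) (X2 s t) (X3 s t)))) < eps /\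
    Rabs (c3 (u (mkV3 (X1 a b) (X2 a b) (X3 a b))) - c3 (u (mkV3 (X1 s t) (X2 s t) (X3 s t)))) < eps).
  { intros eps He. destruct (Hcont _ (Hs s t) eps He) as [d0 [Hd0 Hd0']].
    destruct (H1 (d0/2)) as [e1 [He1 K1]]; [lra|]. destruct (H2 (d0/2)) as [e2 [He2 K2]]; [lra|].
    destruct (H3 (d0/2)) as [e3 [He3 K3]]; [lra|].
    exists (Rmin e1 (Rmin e2 e3)). split. repeat apply Rmin_pos; auto.
    intros a b Ha Hb. pose proof (Rmin_l e1 (Rmin e2 e3)). pose proof (Rmin_r e1 (Rmin e2 e3)).
    pose proof (Rmin_l e2 e3). pose proof (Rmin_r e2 e3).
    apply Hd0'. apply Hs. apply dist3_small; simpl; auto.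
    - rewrite Rabs_minus_sym. apply K1; lra.
    - rewrite Rabs_minus_sym. apply K2; lra.
    - rewrite Rabs_minus_sym. apply K3; lra. }
  split; [|split]; intros eps He; destruct (K eps He) as [d [Hd Kd]]; exists d; split; auto;
    intros a b Ha Hb; apply (Kd a b Ha Hb). Qed.

Section Hemi.
Variable e : R.
Hypothesis He : e = 1 \/ e = -1.
Lemma ee : e * e = 1. Proof. destruct He; subst; ring. Qed.

Definition W (a b : R) := u (sig e (Px a b) (Py a b)).

Lemma C2_Px s t : C2 Px s t. Proof. unfold Px. c2. Qed.
Lemma C2_Py s t : C2 Py s t. Proof. unfold Py. c2. Qed.

Lemma C2_W s t : C2 (fun a b => c1 (W a b)) s t /\ C2 (fun a b => c2 (W a b)) s t /\ C2 (fun a b => c3 (W a b)) s t.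
Proof. unfold W.
  apply (C2_ucomp (fun a b => c1 (sig e (Px a b) (Py a b))) (fun a b => c2 (sig e (Px a b) (Py a b)))
     (fun a b => c3 (sig e (Px a b) (Py a b)))).
  - unfold sig; simpl. c2; try apply C2_Px; try apply C2_Py; pose proof (Dn_pos (Px s t) (Py s t)); unfold Dn in *; lra.
  - unfold sig; simpl. c2; try apply C2_Px; try apply C2_Py; pose proof (Dn_pos (Px s t) (Py s t)); unfold Dn in *; lra.
  - unfold sig; simpl. c2; try apply C2_Px; try apply C2_Py; pose proof (Dn_pos (Px s t) (Py s t)); unfold Dn in *; lra.
  - intros a b. apply sig_sphere, ee.
Qed.

Definition Vr1 a b := (1 - Px a b * Px a b + Py a b * Py a b) * c1 (W a b) + (-2 * Px a b * Py a b) * c2 (W a b)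
   + (-2 * e * Px a b) * c3 (W a b).
Definition Vr2 a b := (-2 * Px a b * Py a b) * c1 (W a b) + (1 + Px a b * Px a b - Py a b * Py a b) * c2 (W a b)
   + (-2 * e * Py a b) * c3 (W a b).
Definition Q a b := Vr1 a b * Vr1 a b + Vr2 a b * Vr2 a b.

Lemma nonzero_gen p1 p2 : let w := u (sig e p1 p2) in
  0 < ((1 - p1 * p1 + p2 * p2) * c1 w + (-2 * p1 * p2) * c2 w + (-2 * e * p1) * c3 w) *
      ((1 - p1 * p1 + p2 * p2) * c1 w + (-2 * p1 * p2) * c2 w + (-2 * e * p1) * c3 w) +
      ((-2 * p1 * p2) * c1 w + (1 + p1 * p1 - p2 * p2) * c2 w + (-2 * e * p2) * c3 w) *
      ((-2 * p1 * p2) * c1 w + (1 + p1 * p1 - p2 * p2) * c2 w + (-2 * e * p2) * c3 w).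
Proof. intros w. pose proof (sig_sphere e p1 p2 ee) as Sp. pose proof (Htan _ Sp) as T. pose proof (Hnz _ Sp) as NZ.
  fold w in T, NZ. pose proof (Dn_pos p1 p2) as DP.
  set (V1 := (1 - p1 * p1 + p2 * p2) * c1 w + (-2 * p1 * p2) * c2 w + (-2 * e * p1) * c3 w).
  set (V2 := (-2 * p1 * p2) * c1 w + (1 + p1 * p1 - p2 * p2) * c2 w + (-2 * e * p2) * c3 w).
  destruct (Rle_lt_dec (V1 * V1 + V2 * V2) 0) as [L|L]; auto. exfalso.
  assert (E1 : V1 = 0) by nra. assert (E2 : V2 = 0) by nra.
  set (Yw := 2 * p1 * c1 w + 2 * p2 * c2 w + e * (1 - p1 * p1 - p2 * p2) * c3 w).
  assert (EY : Yw = 0).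
  { unfold dot, sig in T; simpl in T. unfold Yw.
    assert (T2 : (2 * p1 / Dn p1 p2 * c1 w + 2 * p2 / Dn p1 p2 * c2 w + e * (1 - p1 * p1 - p2 * p2) / Dn p1 p2 * c3 w) * Dn p1 p2 = 0)
      by (rewrite T; ring).
    rewrite <- T2. field. lra. }
  set (D := Dn p1 p2) in *.
  assert (I1 : D * D * c1 w = V1 * (1 - p1 * p1 + p2 * p2) + V2 * (-2 * p1 * p2) + Yw * (2 * p1)).
  { unfold V1, V2, Yw, D, Dn. destruct He; subst e; ring. }
  assert (I2 : D * D * c2 w = V1 * (-2 * p1 * p2) + V2 * (1 + p1 * p1 - p2 * p2) + Yw * (2 * p2)).
  { unfold V1, V2, Yw, D, Dn. destruct He; subst e; ring. }
  assert (I3 : D * D * c3 w = V1 * (-2 * e * p1) + V2 * (-2 * e * p2) + Yw * (e * (1 - p1 * p1 - p2 * p2))).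
  { unfold V1, V2, Yw, D, Dn. destruct He; subst e; ring. }
  rewrite E1, E2, EY in I1, I2, I3.
  rewrite !Rmult_0_l, !Rplus_0_r in I1, I2, I3. assert (DD : D * D <> 0) by nra.
  assert (c1 w = 0) by (apply (Rmult_eq_reg_l (D*D)); [rewrite I1; ring | auto]).
  assert (c2 w = 0) by (apply (Rmult_eq_reg_l (D*D)); [rewrite I2; ring | auto]).
  assert (c3 w = 0) by (apply (Rmult_eq_reg_l (D*D)); [rewrite I3; ring | auto]).
  apply NZ. destruct w as [w1 w2 w3]; simpl in *; subst; reflexivity. Qed.

Lemma Q_pos a b : 0 < Q a b.
Proof. apply (nonzero_gen (Px a b) (Py a b)). Qed.

Definition Hn1 a b := Vr1 a b / sqrt (Q a b).
Definition Hn2 a b := Vr2 a b / sqrt (Q a b).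

Ltac c2w s t := repeat first [ apply C2_const | apply C2_s | apply C2_t | apply C2_cos2pi | apply C2_sin2pi
  | apply C2_Px | apply C2_Py | apply (proj1 (C2_W s t)) | apply (proj1 (proj2 (C2_W s t)))
  | apply (proj2 (proj2 (C2_W s t)))
  | apply C2_minus | apply C2_plus | apply C2_div | apply C2_mult | apply C2_opp ].

Lemma C2_Vr1 s t : C2 Vr1 s t. Proof. unfold Vr1. c2w s t. Qed.
Lemma C2_Vr2 s t : C2 Vr2 s t. Proof. unfold Vr2. c2w s t. Qed.
Lemma C2_Q s t : C2 Q s t. Proof. unfold Q. apply C2_plus; apply C2_mult; auto using C2_Vr1, C2_Vr2. Qed.

Lemma C2_Hn1 s t : C2 Hn1 s t.
Proof. unfold Hn1. apply C2_div. apply C2_Vr1. apply C2_sqrt. apply C2_Q. apply Q_pos.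
  apply Rgt_not_eq, sqrt_lt_R0, Q_pos. Qed.
Lemma C2_Hn2 s t : C2 Hn2 s t.
Proof. unfold Hn2. apply C2_div. apply C2_Vr2. apply C2_sqrt. apply C2_Q. apply Q_pos.
  apply Rgt_not_eq, sqrt_lt_R0, Q_pos. Qed.

Lemma Hn_unit a b : Hn1 a b * Hn1 a b + Hn2 a b * Hn2 a b = 1.
Proof. unfold Hn1, Hn2. pose proof (Q_pos a b). pose proof (sqrt_lt_R0 _ H).
  pose proof (sqrt_sqrt (Q a b) ltac:(lra)).
  transitivity ((Vr1 a b * Vr1 a b + Vr2 a b * Vr2 a b) / (sqrt (Q a b) * sqrt (Q a b))). field. lra.
  rewrite H1. unfold Q. field. fold (Q a b). lra. Qed.
End Hemi.

Lemma bnd a b : Px a b * Px a b + Py a b * Py a b = 1 ->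
  (Hn1 (-1) a b, Hn2 (-1) a b) = refl (Px a b, Py a b) (Hn1 1 a b, Hn2 1 a b).
Proof. intros R1.
  assert (EW : W (-1) a b = W 1 a b).
  { unfold W. f_equal. unfold sig. f_equal.
    replace (1 - Px a b * Px a b - Py a b * Py a b) with 0 by lra. field. apply Rgt_not_eq, Dn_pos. }
  assert (T : Px a b * c1 (W 1 a b) + Py a b * c2 (W 1 a b) = 0).
  { pose proof (Htan _ (sig_sphere 1 (Px a b) (Py a b) ltac:(ring))) as T. fold (W 1 a b) in T.
    unfold dot, sig in T; simpl in T. replace (Dn (Px a b) (Py a b)) with 2 in T by (unfold Dn; lra).
    replace (1 - Px a b * Px a b - Py a b * Py a b) with 0 in T by lra.
    apply (f_equal (fun r => r * 2)) in T. field_simplify in T. lra. }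
  destruct (refl_alg _ _ _ _ (c3 (W 1 a b)) R1 T) as [A1 A2].
  set (p1 := Px a b) in *. set (p2 := Py a b) in *.
  assert (V1e : Vr1 (-1) a b = - ((p1 * p1 - p2 * p2) * Vr1 1 a b + 2 * p1 * p2 * Vr2 1 a b)).
  { unfold Vr1, Vr2. rewrite EW. exact A1. }
  assert (V2e : Vr2 (-1) a b = (p1 * p1 - p2 * p2) * Vr2 1 a b - 2 * p1 * p2 * Vr1 1 a b).
  { unfold Vr1, Vr2. rewrite EW. exact A2. }
  assert (Qe : Q (-1) a b = Q 1 a b).
  { unfold Q. rewrite V1e, V2e. apply refl_norm; auto. }
  unfold Hn1, Hn2, refl, cmul, cconj; simpl. rewrite Qe, V1e, V2e.
  pose proof (sqrt_lt_R0 _ (Q_pos 1 (or_introl eq_refl) a b)).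
  f_equal; field; lra. Qed.

Lemma Hn_dep e a b a' b' : Px a b = Px a' b' -> Py a b = Py a' b' ->
  Hn1 e a b = Hn1 e a' b' /\ Hn2 e a b = Hn2 e a' b'.
Proof. intros E1 E2. unfold Hn1, Hn2, Q, Vr1, Vr2, W. rewrite E1, E2. auto. Qed.

Definition HP e s t : R * R := (Hn1 e s t, Hn2 e s t).


Lemma uc_pair e : (e = 1 \/ e = -1) -> exists d, 0 < d /\ forall s t s' t', in01 s -> in01 t -> in01 s' -> in01 t' ->
  Rabs (s - s') < d -> Rabs (t - t') < d -> close (cmul (cconj (HP e s t)) (HP e s' t')).
Proof. intros He.
  destruct (UC (Hn1 e) (fun s t _ _ => C2_Hn1 e He s t) (1/8) ltac:(lra)) as [d1 [Hd1 U1]].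
  destruct (UC (Hn2 e) (fun s t _ _ => C2_Hn2 e He s t) (1/8) ltac:(lra)) as [d2 [Hd2 U2]].
  exists (Rmin d1 d2). split. apply Rmin_pos; auto.
  intros s t s' t' ? ? ? ? X1 X2. pose proof (Rmin_l d1 d2). pose proof (Rmin_r d1 d2).
  specialize (U1 s t s' t' H H0 H1 H2 ltac:(lra) ltac:(lra)).
  specialize (U2 s t s' t' H H0 H1 H2 ltac:(lra) ltac:(lra)).
  apply unit_close; unfold HP; simpl; try apply Hn_unit; auto.
  apply Rabs_def2 in U1. apply Rabs_def2 in U2. nra. Qed.

Lemma grid_in i N : (0 < N)%nat -> (i <= N)%nat -> in01 (INR i / INR N).
Proof. intros HN Hi. pose proof (lt_0_INR _ HN). pose proof (le_INR _ _ Hi). pose proof (pos_INR i).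
  split. unfold Rdiv. apply Rmult_le_pos; auto. left; apply Rinv_0_lt_compat; auto.
  apply (Rmult_le_reg_r (INR N)); auto. field_simplify; lra. Qed.

Lemma grid_step j N : (0 < N)%nat -> INR (S j) / INR N - INR j / INR N = / INR N.
Proof. intros HN. pose proof (lt_0_INR _ HN). rewrite S_INR. field. lra. Qed.

Definition Gr e N i j := HP e (INR i / INR N) (INR j / INR N).

Lemma grid_periodic e N i : (0 < N)%nat -> Gr e N i N = Gr e N i 0.
Proof. intros HN. pose proof (lt_0_INR _ HN). unfold Gr, HP.
  assert (E1 : INR N / INR N = 1) by (field; lra). assert (E0 : INR 0 / INR N = 0) by (simpl; field; lra).
  rewrite E1, E0. destruct (Hn_dep e (INR i / INR N) 1 (INR i / INR N) 0) as [A B];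
  [unfold Px; rewrite Rmult_1_r, Rmult_0_r, cos_2PI, cos_0; auto
  |unfold Py; rewrite Rmult_1_r, Rmult_0_r, sin_2PI, sin_0; auto|].
  rewrite A, B; auto. Qed.

Lemma grid_stokes e N d : (e = 1 \/ e = -1) -> (0 < N)%nat -> 0 < d -> / INR N < d ->
  (forall s t s' t', in01 s -> in01 t -> in01 s' -> in01 t' ->
  Rabs (s - s') < d -> Rabs (t - t') < d -> close (cmul (cconj (HP e s t)) (HP e s' t'))) ->
  forall i, (i <= N)%nat -> hsum (Gr e N) N i = hsum (Gr e N) N 0.
Proof. intros He HN Hd HNd Hc. pose proof (lt_0_INR _ HN). pose proof (Rinv_0_lt_compat _ H).
  assert (HS : forall j, (j < N)%nat -> Rabs (INR j / INR N - INR (S j) / INR N) < d).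
  { intros j _. rewrite Rabs_minus_sym, grid_step, Rabs_right; auto; lra. }
  assert (H0s : forall x, Rabs (x - x) < d) by (intros; rewrite Rminus_diag, Rabs_R0; auto).
  induction i; intros Hi; auto. rewrite <- IHi by lia. symmetry. apply stokes_step.
  - intros j Hj. unfold Gr. split; apply Hc; auto; apply grid_in; lia.
  - intros j Hj. unfold Gr. apply Hc; auto; try (apply grid_in; lia). all: try (apply HS; lia).
  - apply grid_periodic; auto.
  - apply grid_periodic; auto.
Qed.

Lemma hsum_zero e N : (0 < N)%nat -> hsum (Gr e N) N 0 = 0.
Proof. intros HN. unfold hsum. rewrite <- (Rmult_0_r (INR N)), <- sumN_const. apply sumN_ext.
  intros j _. unfold Gr, HP. assert (E0 : INR 0 / INR N = 0) by (simpl; unfold Rdiv; ring).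
  rewrite E0. destruct (Hn_dep e 0 (INR j / INR N) 0 (INR (S j) / INR N)) as [A B];
  [unfold Px; ring | unfold Py; ring |]. rewrite A, B. apply ang_same. Qed.

Lemma trig_small h : 0 < h <= 1/4 -> 3 * Rabs (sin h) < cos h /\ atan (sin h / cos h) = h.
Proof. intros Hh. pose proof PI2_1. pose proof PI_RGT_0.
  assert (Sp : 0 <= sin h) by (apply sin_ge_0; lra). pose proof (sin_lt_x h ltac:(lra)).
  assert (Cp : 0 < cos h) by (apply cos_gt_0; lra). pose proof (sin2_cos2 h). unfold Rsqr in *.
  split. rewrite Rabs_right by lra. nra.
  change (sin h / cos h) with (tan h). apply atan_tan. lra. Qed.

Lemma circ_step N j : (0 < N)%nat ->
  cmul (cconj (Px (INR N / INR N) (INR j / INR N), Py (INR N / INR N) (INR j / INR N)))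
       (Px (INR N / INR N) (INR (S j) / INR N), Py (INR N / INR N) (INR (S j) / INR N))
  = (cos (2 * PI / INR N), sin (2 * PI / INR N)).
Proof. intros HN. pose proof (lt_0_INR _ HN). assert (E1 : INR N / INR N = 1) by (field; lra).
  rewrite E1. unfold Px, Py, cmul, cconj; cbn [fst snd].
  assert (Eh : 2 * PI / INR N = 2 * PI * (INR (S j) / INR N) - 2 * PI * (INR j / INR N)).
  { rewrite S_INR. field. lra. }
  rewrite Eh, cos_minus, sin_minus. f_equal; ring. Qed.

Lemma hairy_false : False.
Proof.
  destruct (uc_pair 1 (or_introl eq_refl)) as [d1 [Hd1 C1]].
  destruct (uc_pair (-1) (or_intror eq_refl)) as [d2 [Hd2 C2']].
  set (d := Rmin d1 d2). assert (Hd : 0 < d) by (apply Rmin_pos; auto).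
  destruct (archimed_cor1 d Hd) as [N0 [HN0 HN0']].
  set (N := (N0 + 32)%nat). assert (HN : (0 < N)%nat) by (unfold N; lia).
  pose proof (lt_0_INR _ HN) as NP. pose proof (lt_0_INR _ HN0') as N0P.
  assert (NN : INR N0 + 32 <= INR N) by (unfold N; rewrite plus_INR; simpl; lra).
  assert (Nd : / INR N < d).
  { eapply Rle_lt_trans; [|exact HN0]. apply Rinv_le_contravar; lra. }
  assert (Cl1 : forall s t s' t', in01 s -> in01 t -> in01 s' -> in01 t' ->
    Rabs (s - s') < d -> Rabs (t - t') < d -> close (cmul (cconj (HP 1 s t)) (HP 1 s' t'))).
  { intros. apply C1; auto; eapply Rlt_le_trans; eauto; apply Rmin_l. }
  assert (Cl2 : forall s t s' t', in01 s -> in01 t -> in01 s' -> in01 t' ->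
    Rabs (s - s') < d -> Rabs (t - t') < d -> close (cmul (cconj (HP (-1) s t)) (HP (-1) s' t'))).
  { intros. apply C2'; auto; apply (Rlt_le_trans _ d); auto; apply Rmin_r. }
  pose proof (grid_stokes 1 N d (or_introl eq_refl) HN Hd Nd Cl1 N (le_n N)) as S1.
  pose proof (grid_stokes (-1) N d (or_intror eq_refl) HN Hd Nd Cl2 N (le_n N)) as S2.
  rewrite hsum_zero in S1, S2 by auto.
  set (h := 2 * PI / INR N).
  assert (Hh : 0 < h <= 1/4).
  { pose proof PI_RGT_0. pose proof PI_4. unfold h. split. apply Rdiv_lt_0_compat; lra.
    apply (Rmult_le_reg_r (INR N)); auto. field_simplify; lra. }
  destruct (trig_small h Hh) as [TS TA].
  assert (Key : forall j, (j < N)%nat ->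
    ang (Gr (-1) N N j) (Gr (-1) N N (S j)) = 2 * h - ang (Gr 1 N N j) (Gr 1 N N (S j))).
  { intros j Hj. unfold Gr.
    assert (U : forall t, Px (INR N / INR N) t * Px (INR N / INR N) t + Py (INR N / INR N) t * Py (INR N / INR N) t = 1).
    { intros t. assert (E1 : INR N / INR N = 1) by (field; lra). rewrite E1. unfold Px, Py.
      pose proof (sin2_cos2 (2 * PI * t)). unfold Rsqr in H. lra. }
    unfold HP. rewrite (bnd _ _ (U _)), (bnd _ _ (U _)).
    rewrite ang_refl.
    - unfold ang at 1. rewrite circ_step by auto. unfold arg0; cbn [fst snd]. fold h. rewrite TA. ring.
    - rewrite circ_step by auto. simpl. auto.
    - apply Cl1; try (apply grid_in; lia). rewrite Rminus_diag, Rabs_R0; auto.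
      rewrite Rabs_minus_sym, grid_step, Rabs_right; auto; try lra. left; apply Rinv_0_lt_compat; auto. }
  unfold hsum in S1, S2. rewrite (sumN_ext _ (fun j => 2 * h + (-1) * ang (Gr 1 N N j) (Gr 1 N N (S j)))) in S2
    by (intros; rewrite Key by auto; ring).
  rewrite sumN_plus, sumN_scal, sumN_const in S2.
  assert (INR N * (2 * h) = 4 * PI) by (unfold h; field; lra).
  pose proof PI_RGT_0. rewrite (sumN_scal (-1)) in S2. rewrite S1 in S2. nra.
Qed.
End Hairy.

Lemma comp_le_dist x y : Rabs (c1 x - c1 y) <= dist3 x y /\ Rabs (c2 x - c2 y) <= dist3 x y /\ Rabs (c3 x - c3 y) <= dist3 x y.
Proof. unfold dist3, dot, vsub, vadd, vscale; simpl.
  pose proof (Rle_0_sqr (c1 x + -1 * c1 y)). pose proof (Rle_0_sqr (c2 x + -1 * c2 y)).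
  pose proof (Rle_0_sqr (c3 x + -1 * c3 y)). unfold Rsqr in *.
  split; [|split]; [rewrite <- (sqrt_Rsqr_abs (c1 x - c1 y)) | rewrite <- (sqrt_Rsqr_abs (c2 x - c2 y)) |
    rewrite <- (sqrt_Rsqr_abs (c3 x - c3 y))]; apply sqrt_le_1_alt; unfold Rsqr; lra. Qed.

Lemma sphere_comp x : on_sphere x -> Rabs (c1 x) <= 1 /\ Rabs (c2 x) <= 1 /\ Rabs (c3 x) <= 1.
Proof. unfold on_sphere, dot. intros H.
  assert (forall a, a * a <= 1 -> Rabs a <= 1) by (intros a Ha; unfold Rabs; destruct Rcase_abs; nra).
  pose proof (Rle_0_sqr (c1 x)). pose proof (Rle_0_sqr (c2 x)). pose proof (Rle_0_sqr (c3 x)). unfold Rsqr in *.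
  split; [|split]; apply H0; lra. Qed.

Lemma prod_lip a b a' b' d : Rabs a <= 1 -> Rabs b' <= 1 -> Rabs (a - a') <= d -> Rabs (b - b') <= d ->
  Rabs (a * b - a' * b') <= 2 * d.
Proof. intros. replace (a * b - a' * b') with (a * (b - b') + (a - a') * b') by ring.
  eapply Rle_trans. apply Rabs_triang. rewrite !Rabs_mult.
  pose proof (Rabs_pos a). pose proof (Rabs_pos b'). pose proof (Rabs_pos (b - b')). pose proof (Rabs_pos (a - a')).
  nra. Qed.

Lemma cont_lip (s : V3 -> FV) : (forall x y, on_sphere x -> on_sphere y ->
  Rabs (fst (s x) - fst (s y)) <= 2 * dist3 x y /\ Rabs (c1 (snd (s x)) - c1 (snd (s y))) <= 2 * dist3 x y /\
  Rabs (c2 (snd (s x)) - c2 (snd (s y))) <= 2 * dist3 x y /\ Rabs (c3 (snd (s x)) - c3 (snd (s y))) <= 2 * dist3 x y) ->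
  continuous_on_S2 s.
Proof. intros L x Hx eps He. exists (eps / 4). split. lra. intros y Hy Hd.
  destruct (L x y Hx Hy) as [A [B [C' D']]].
  unfold distF, dot, vsub, vadd, vscale; simpl.
  set (a := fst (s x) - fst (s y)) in *. set (b1 := c1 (snd (s x)) + -1 * c1 (snd (s y))).
  set (b2 := c2 (snd (s x)) + -1 * c2 (snd (s y))). set (b3 := c3 (snd (s x)) + -1 * c3 (snd (s y))).
  assert (Rabs b1 < eps / 2) by (unfold b1; replace (c1 (snd (s x)) + -1 * c1 (snd (s y))) with (c1 (snd (s x)) - c1 (snd (s y))) by ring; lra).
  assert (Rabs b2 < eps / 2) by (unfold b2; replace (c2 (snd (s x)) + -1 * c2 (snd (s y))) with (c2 (snd (s x)) - c2 (snd (s y))) by ring; lra).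
  assert (Rabs b3 < eps / 2) by (unfold b3; replace (c3 (snd (s x)) + -1 * c3 (snd (s y))) with (c3 (snd (s x)) - c3 (snd (s y))) by ring; lra).
  assert (Rabs a < eps / 2) by lra.
  apply Rabs_def2 in H. apply Rabs_def2 in H0. apply Rabs_def2 in H1. apply Rabs_def2 in H2.
  rewrite <- (sqrt_square eps) by lra. apply sqrt_lt_1_alt. split.
  - pose proof (Rle_0_sqr a). pose proof (Rle_0_sqr b1). pose proof (Rle_0_sqr b2). pose proof (Rle_0_sqr b3).
    unfold Rsqr in *. simpl. nra.
  - simpl. nra. Qed.

Definition E1 (x : V3) : FV := (c1 x, mkV3 (1 - c1 x * c1 x) (- (c1 x * c2 x)) (- (c1 x * c3 x))).
Definition E2 (x : V3) : FV := (c2 x, mkV3 (- (c2 x * c1 x)) (1 - c2 x * c2 x) (- (c2 x * c3 x))).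
Definition E3 (x : V3) : FV := (c3 x, mkV3 (- (c3 x * c1 x)) (- (c3 x * c2 x)) (1 - c3 x * c3 x)).

Ltac liptac x y Hx Hy :=
  destruct (comp_le_dist x y) as [D1 [D2 D3]]; destruct (sphere_comp x Hx) as [S1 [S2 S3]];
  destruct (sphere_comp y Hy) as [T1 [T2 T3]]; pose proof (Rabs_pos (c1 x - c1 y));
  repeat split; simpl;
  first [ lra
  | match goal with |- Rabs (1 - ?a * ?b - (1 - ?a' * ?b')) <= _ =>
      replace (1 - a * b - (1 - a' * b')) with (- (a * b - a' * b')) by ring; rewrite Rabs_Ropp;
      apply prod_lip; auto end
  | match goal with |- Rabs (- (?a * ?b) - - (?a' * ?b')) <= _ =>
      replace (- (a * b) - - (a' * b')) with (- (a * b - a' * b')) by ring; rewrite Rabs_Ropp;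
      apply prod_lip; auto end ].

Lemma E1_cont : continuous_on_S2 E1.
Proof. apply cont_lip. intros x y Hx Hy. unfold E1. liptac x y Hx Hy. Qed.
Lemma E2_cont : continuous_on_S2 E2.
Proof. apply cont_lip. intros x y Hx Hy. unfold E2. liptac x y Hx Hy. Qed.
Lemma E3_cont : continuous_on_S2 E3.
Proof. apply cont_lip. intros x y Hx Hy. unfold E3. liptac x y Hx Hy. Qed.

Lemma E_basis x : on_sphere x -> fiber_basis x (E1 x) (E2 x) (E3 x).
Proof. intros Hx. unfold on_sphere, dot in Hx. destruct x as [x1 x2 x3]; simpl in Hx.
  unfold fiber_basis, in_fiber, tangent, E1, E2, E3, dot; simpl.
  split; [|split; [|split; [|split]]].
  - nsatz.
  - nsatz.
  - nsatz.
  - intros a b c H. unfold comb3, fadd, fscale, fzero, vadd, vscale, vzero in H; simpl in H.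
    injection H as H0 Ha Hb Hc.
    split; [|split]; nsatz.
  - intros [t [v1 v2 v3]] Hv. simpl in Hv.
    exists (t * x1 + v1), (t * x2 + v2), (t * x3 + v3).
    unfold comb3, fadd, fscale, vadd, vscale; simpl. f_equal; [|f_equal]; nsatz.
Qed.

Lemma part2 : exists e1 e2 e3 : V3 -> FV, moving_basis e1 e2 e3.
Proof. exists E1, E2, E3. unfold moving_basis, cont_section.
  split; [|split; [|split]].
  - split; [|apply E1_cont]. intros x Hx. apply (E_basis x Hx).
  - split; [|apply E2_cont]. intros x Hx. apply (E_basis x Hx).
  - split; [|apply E3_cont]. intros x Hx. apply (E_basis x Hx).
  - apply E_basis.
Qed.

Lemma comp_le_distF w z : Rabs (c1 (snd w) - c1 (snd z)) <= distF w z /\ Rabs (c2 (snd w) - c2 (snd z)) <= distF w z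
  /\ Rabs (c3 (snd w) - c3 (snd z)) <= distF w z.
Proof. unfold distF, dot, vsub, vadd, vscale; simpl.
  pose proof (Rle_0_sqr (c1 (snd w) + -1 * c1 (snd z))). pose proof (Rle_0_sqr (c2 (snd w) + -1 * c2 (snd z))).
  pose proof (Rle_0_sqr (c3 (snd w) + -1 * c3 (snd z))). pose proof (Rle_0_sqr (fst w - fst z)). unfold Rsqr in *.
  split; [|split]; [rewrite <- (sqrt_Rsqr_abs (c1 (snd w) - c1 (snd z))) | rewrite <- (sqrt_Rsqr_abs (c2 (snd w) - c2 (snd z))) |
    rewrite <- (sqrt_Rsqr_abs (c3 (snd w) - c3 (snd z)))]; apply sqrt_le_1_alt; unfold Rsqr; simpl; lra. Qed.

Lemma part3 : ~ (exists e1 e2 e3 : V3 -> FV,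
        moving_basis e1 e2 e3 /\
        forall x, on_sphere x ->
          fst (e1 x) = f1 x /\ fst (e2 x) = f2 x /\ fst (e3 x) = f3 x).
Proof. intros [e1 [e2 [e3 [[_ [[Hf Hc] [_ Hb]]] Hfst]]]].
  apply (hairy_false (fun x => snd (e2 x))).
  - intros x Hx. apply (Hf x Hx).
  - intros x Hx Z. destruct (Hb x Hx) as [_ [_ [_ [Ind _]]]].
    destruct (Hfst x Hx) as [_ [F2 _]]. unfold f2 in F2.
    assert (E : comb3 0 1 0 (e1 x) (e2 x) (e3 x) = fzero).
    { destruct (e2 x) as [t v] eqn:Q. simpl in F2, Z. subst. unfold comb3, fadd, fscale, fzero, vadd, vscale, vzero.
      simpl. f_equal; try f_equal; ring. }
    destruct (Ind _ _ _ E) as [_ [X _]]. lra.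
  - intros x Hx eps He. destruct (Hc x Hx eps He) as [d [Hd K]]. exists d. split; auto.
    intros y Hy Hxy. specialize (K y Hy Hxy). destruct (comp_le_distF (e2 x) (e2 y)) as [A [B C']].
    rewrite !(Rabs_minus_sym (c1 (snd (e2 y)))), !(Rabs_minus_sym (c2 (snd (e2 y)))), !(Rabs_minus_sym (c3 (snd (e2 y)))).
    repeat split; lra.
Qed.

Theorem mainTheorem5 :
  (forall x, on_sphere x -> parseval_R (f1 x) (f2 x) (f3 x)) /\
  (exists e1 e2 e3 : V3 -> FV, moving_basis e1 e2 e3) /\
  ~ (exists e1 e2 e3 : V3 -> FV,
        moving_basis e1 e2 e3 /\
        forall x, on_sphere x ->
          fst (e1 x) = f1 x /\ fst (e2 x) = f2 x /\ fst (e3 x) = f3 x).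
Proof. split; [|split]. - intros x _ t. unfold f1, f2, f3. ring. - apply part2. - apply part3. Qed.
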